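(* Assume that $\nabla\kappa_S(0)=(m_1,\ldots,m_h)\neq 0$. Then we have the following cases. $(i)$ If there exists $i\in\{1,\ldots,h\}$ such that $x_im_i<0$, then $I_{\mathrm{MD}}(x;\nabla\kappa_S(0))=\infty$. $(ii)$ If there exists $i\in\{1,\ldots,h\}$ such that $m_i=0$ and $x_i\neq 0$, then $I_{\mathrm{MD}}(x;\nabla\kappa_S(0))=\infty$. $(iii)$ If there exists $c(x)\geq 0$ such that $x_i=c(x)m_i$ for every $i\in\{1,\ldots,h\}$, then $I_{\mathrm{MD}}(x;\nabla\kappa_S(0))=H_\nu(c(x);1)$ or, equivalently, $I_{\mathrm{MD}}(x;\nabla\kappa_S(0))=H_\nu(x_i;m_i)$ for every $i\in\{1,\ldots,h\}$.
   Context: Let $\{S(t):t\geq 0\}$ be an $\mathbb{R}^h$-valued Lévy process such that $\kappa_S(\theta):=\log\mathbb{E}[e^{\langle\theta,S(1)\rangle}]$ is finite in a neighborhood of the origin of $\mathbb{R}^h$ (where $\langle\cdot,\cdot\rangle$ is the inner product in $\mathbb{R}^h$), and let $\nu\in(0,1)$ and $\{L_\nu(t):t\geq 0\}$ be an inverse stable subordinator independent of $\{S(t)\}$. For $x=(x_1,\ldots,x_h)\in\mathbb{R}^h$ and $\nabla\kappa_S(0)\neq 0$, the (noncentral moderate deviation) rate function is defined by $$I_{\mathrm{MD}}(x;\nabla\kappa_S(0)):=\sup_{\theta\in\mathbb{R}^h}\{\langle\theta,x\rangle-(\langle\theta,\nabla\kappa_S(0)\rangle)^{1/\nu}1_{\langle\theta,\nabla\kappa_S(0)\rangle\geq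 0}\}$$ (it governs the LDP, with speed $1/a_t$, of $\{(a_tt)^{1-\nu}S(L_\nu(t))/t\}$ for $a_t\to 0$, $ta_t\to\infty$). For real $x$ and $m\neq 0$ define $$H_\nu(x;m):=\begin{cases}(\nu^{\nu/(1-\nu)}-\nu^{1/(1-\nu)})\left(\frac{x}{m}\right)^{1/(1-\nu)}&\text{if } \frac{x}{m}\geq 0\\ \infty&\text{if } \frac{x}{m}<0.\end{cases}$$ *)

(* Defs.v *)
From HB Require Import structures.
From mathcomp Require Import all_boot all_order all_algebra.
From mathcomp Require Import all_classical all_reals all_analysis.
Set Implicit Arguments. Unset Strict Implicit. Unset Printing Implicit Defensive.
Import Order.TTheory GRing.Theory Num.Theory.
Local Open Scope classical_set_scope.
Local Open Scope ring_scope.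

Definition inner (R : realType) (h : nat) (a b : 'I_h -> R) : R :=
  \sum_(i < h) a i * b i.

Definition I_MD (R : realType) (nu : R) (h : nat) (x m : 'I_h -> R) : \bar R :=
  ereal_sup [set ((inner th x -
       (if 0 <= inner th m then powR (inner th m) (1 / nu) else 0))%:E)%E
     | th in [set: 'I_h -> R]].

Definition H_nu (R : realType) (nu x m : R) : \bar R :=
  if 0 <= x / m then
    ((powR nu (nu / (1 - nu)) - powR nu (1 / (1 - nu))) * powR (x / m) (1 / (1 - nu)))%:E
  else +oo%E.

(* Main.v *)
Require Import Defs.
From HB Require Import structures.
From mathcomp Require Import all_boot all_order all_algebra.
From mathcomp Require Import all_classical all_reals all_analysis.
From mathcomp Require Import ring lra.
Import Order.TTheory GRing.Theory Num.Theory.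
Local Open Scope ring_scope.

Lemma powRV (R : realType) (x r : R) : 0 < x -> powR x^-1 r = (powR x r)^-1.
Proof.
move=> x0; have := @powRM R x^-1 x r.
rewrite invr_ge0 ltW // => /(_ isT isT).
rewrite mulVf ?gt_eqF // powR1 => /esym E.
have p0 : powR x r != 0 by rewrite gt_eqF // powR_gt0.
by apply: (mulIf p0); rewrite E mulVf.
Qed.

Lemma young_nu (R : realType) (nu c s : R) : 0 < nu < 1 -> 0 <= c -> 0 <= s ->
  c * s - powR s (1 / nu) <=
  (powR nu (nu / (1 - nu)) - powR nu (1 / (1 - nu))) * powR c (1 / (1 - nu)).
Proof.
case/andP=> n0 n1 c0 s0.
have mu0 : 0 < (powR nu nu) by rewrite powR_gt0.
have q0 : 0 < 1 - nu by rewrite subr_gt0.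
have := @conjugate_powR R (s / (powR nu nu)) (c * (powR nu nu)) (1 / nu) (1 / (1 - nu)).
have h1 : 0 <= s / (powR nu nu) by rewrite divr_ge0 // ltW.
have h2 : 0 <= c * (powR nu nu) by rewrite mulr_ge0 // ltW.
have h3 : 0 < 1 / nu by rewrite divr_gt0.
have h4 : 0 < 1 / (1 - nu) by rewrite divr_gt0.
have h5 : (1 / nu)^-1 + (1 / (1 - nu))^-1 = 1 by rewrite !invf_div !divr1 addrC subrK.
move=> /(_ h1 h2 h3 h4 h5).
have mu0' : 0 <= (powR nu nu)^-1 by rewrite invr_ge0 ltW.
rewrite (powRM _ s0 mu0') powRV // -powRrM.
rewrite (_ : nu * (1/nu) = 1); last by field; rewrite gt_eqF.
rewrite powRr1 ?(ltW n0) //.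
rewrite (powRM _ c0 (ltW mu0)) -powRrM.
have -> : s / (powR nu nu) * (c * (powR nu nu)) = c * s by field; rewrite gt_eqF.
have E : powR nu (1 / (1 - nu)) = nu * powR nu (nu / (1 - nu)).
  have -> : nu / (1 - nu) = 1 / (1 - nu) - 1 by field; rewrite gt_eqF.
  by rewrite mulr_powRB1 ?(ltW n0).
rewrite E.
have -> : nu * (1 / (1 - nu)) = nu / (1 - nu) by rewrite mul1r.
move: (s `^ (1/nu)) (c `^ (1 / (1 - nu))) (nu `^ (nu / (1 - nu))) => P Q N.
have -> : P / nu / (1 / nu) = P by field; rewrite gt_eqF.
have -> : Q * N / (1 / (1 - nu)) = (N - nu * N) * Q by field; rewrite gt_eqF.
by move=> H; rewrite lerBlDr addrC.
Qed.

Local Open Scope classical_set_scope.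

Lemma inner_ej (R : realType) (h : nat) (j : 'I_h) (t : R) (v : 'I_h -> R) :
  inner (fun k => if k == j then t else 0) v = t * v j.
Proof.
rewrite /inner (bigD1 j) //= eqxx big1 ?addr0 // => k /negbTE ->.
by rewrite mul0r.
Qed.

Lemma sup_pinfty (R : realType) (T : Type) (g : T -> R) :
  (forall r, exists t, r <= g t) ->
  ereal_sup [set (g t)%:E | t in [set: T]] = +oo%E.
Proof.
move=> H.
have ub : forall r : R, (r%:E <= ereal_sup [set (g t)%:E | t in [set: T]])%E.
  move=> r; have [t rt] := H r.
  apply: (@le_trans _ _ (g t)%:E); first by rewrite lee_fin.
  by apply: ereal_sup_ubound; exists t.
move: ub; case: (ereal_sup _) => [r| |] // ub.
  by have := ub (r + 1); rewrite lee_fin; clear ub => ?; exfalso; lra.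
by have := ub 0.
Qed.

Lemma fterm0 (R : realType) (nu s : R) : 0 < nu -> s <= 0 ->
  (if 0 <= s then powR s (1 / nu) else 0) = 0.
Proof.
move=> n0 s0; case: ifP => // s0'.
have -> : s = 0 by apply/eqP; rewrite eq_le s0 s0'.
by rewrite powR0 // div1r invr_eq0 gt_eqF.
Qed.

Theorem proposition3p4 (R : realType) (nu : R) (h : nat) (m x : 'I_h -> R) :
  0 < nu < 1 ->
  (exists i, m i != 0) ->
  ((exists i, x i * m i < 0) -> I_MD nu x m = +oo%E) /\
  ((exists i, m i = 0 /\ x i != 0) -> I_MD nu x m = +oo%E) /\
  (forall c : R, 0 <= c -> (forall i, x i = c * m i) ->
     I_MD nu x m = H_nu nu c 1 /\
     (forall i, m i != 0 -> I_MD nu x m = H_nu nu (x i) (m i))).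
Proof.
move=> /[dup] /andP[n0 n1] nu01 [j mj].
split.
  case=> i xm; rewrite /I_MD; apply: sup_pinfty => r.
  set a := - (x i * m i).
  have a0 : 0 < a by rewrite oppr_gt0.
  exists (fun k => if k == i then - (`|r| / a) * m i else 0).
  rewrite !inner_ej fterm0 //; last first.
    by rewrite -mulrA -expr2 mulr_le0_ge0 ?sqr_ge0 // oppr_le0 divr_ge0 // ltW.
  rewrite subr0 -mulrA (mulrC (m i) (x i)) mulNr -mulrN -/a divfK ?gt_eqF //.
  exact: ler_norm.
split.
  case=> i [mi xi]; rewrite /I_MD; apply: sup_pinfty => r.
  exists (fun k => if k == i then `|r| / x i else 0).
  rewrite !inner_ej mi mulr0 fterm0 // subr0 divfK //.
  exact: ler_norm.
move=> c c0 hx.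
have HI : I_MD nu x m = H_nu nu c 1.
  rewrite /H_nu divr1 c0.
  have inx : forall th, inner th x = c * inner th m.
    move=> th; rewrite /inner mulr_sumr; apply: eq_bigr => k _.
    by rewrite hx mulrCA.
  set K := (_ * _).
  apply/le_anti/andP; split.
    apply: ge_ereal_sup => _ [th _ <-]; rewrite lee_fin inx.
    case: (lerP 0 (inner th m)) => hs.
      by apply: young_nu.
    rewrite subr0; apply: (@le_trans _ _ 0).
      by rewrite mulr_ge0_le0 // ltW.
    by have := @young_nu R nu c 0 nu01 c0 (lexx 0); rewrite mulr0 powR0 ?sub0r ?oppr0 // div1r invr_eq0 gt_eqF.
  set s := powR (c * nu) (nu / (1 - nu)).
  apply: ereal_sup_ubound.
  exists (fun k => if k == j then s / m j else 0) => //.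
  rewrite inx inner_ej divfK // powR_ge0.
  rewrite /s -powRrM.
  have -> : nu / (1 - nu) * (1 / nu) = 1 / (1 - nu).
    by field; rewrite !gt_eqF // subr_gt0.
  rewrite powRM ?(ltW n0) //.
  have -> : nu / (1 - nu) = 1 / (1 - nu) - 1 by field; rewrite gt_eqF // subr_gt0.
  rewrite powRM ?(ltW n0) // mulrA mulr_powRB1 // ?divr_gt0 ?subr_gt0 //.
  rewrite /K (_ : 1 / (1 - nu) - 1 = nu / (1 - nu)); last by field; rewrite gt_eqF // subr_gt0.
  congr (_%:E); ring.
split => // i mi.
by rewrite HI /H_nu hx mulfK // divr1.
Qed.
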